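(* A $\star$-metric space $(X,d^\star)$ is complete if and only if every family $\{F_s\}_{s\in S}$ of closed subsets of $X$ which has the finite intersection property and which, for every $\epsilon>0$, contains a set of diameter less than $\epsilon$, has nonempty intersection $\bigcap_{s\in S}F_s\neq\emptyset$.
   Context: A $t$-definer is a function $\star:[0,\infty)\times[0,\infty)\to[0,\infty)$ such that for all $a,b,c\ge 0$: $a\star b=b\star a$; $a\star(b\star c)=(a\star b)\star c$; if $a\le b$ then $a\star c\le b\star c$; $a\star 0=a$; and $\star$ is continuous in its first variable with respect to the Euclidean topology. Given a nonempty set $X$ and a $t$-definer $\star$, a $\star$-metric on $X$ is a function $d^\star:X\times X\to[0,\infty)$ such that for all $x,y,z\in X$: $d^\star(x,y)=0$ iff $x=y$; $d^\star(x,y)=d^\star(y,x)$; and $d^\star(x,y)\le d^\star(x,z)\star d^\star(z,y)$. Closedness refers to the topology consisting of all $U\subseteq X$ such that for each $a\in U$ there is $r>0$ with $\{x: d^\star(a,x)<r\}\subseteq U$. The diameter of $A\subseteq X$ is $\delta(A)=\sup_{x,y\in A}d^\star(x,y)$, with $\delta(\emptyset)=0$. A family has the finite intersection property if every finite subfamily has nonempty intersection. A sequence $\{x_n\}$ is Cauchy if for every $\epsilon>0$ there is $k$ with $d^\star(x_n,x_m)<\epsilon$ for all $m,n\ge k$; it converges to $x$ if for every $\epsilon>0$ there is $k$ with $d^\star(x,x_n)<\epsilon$ for $n\ge k$. $(X,d^\star)$ is complete if every Cauchy sequence converges to a point of $X$. *)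

(* Defs.v *)
From Stdlib Require Import Reals.
From Coquelicot Require Import Coquelicot.
Open Scope R_scope.

Definition t_definer (star : R -> R -> R) : Prop :=
  (forall a b, 0 <= a -> 0 <= b -> 0 <= star a b) /\
  (forall a b, 0 <= a -> 0 <= b -> star a b = star b a) /\
  (forall a b c, 0 <= a -> 0 <= b -> 0 <= c ->
       star a (star b c) = star (star a b) c) /\
  (forall a b c, 0 <= a -> 0 <= b -> 0 <= c -> a <= b -> star a c <= star b c) /\
  (forall a, 0 <= a -> star a 0 = a) /\
  (forall b a, 0 <= b -> 0 <= a ->
     forall eps, 0 < eps -> exists delta, 0 < delta /\
       forall x, 0 <= x -> Rabs (x - a) < delta ->
         Rabs (star x b - star a b) < eps).

Definition star_metric {X : Type} (star : R -> R -> R) (d : X -> X -> R) : Prop :=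
  (forall x y, 0 <= d x y) /\
  (forall x y, d x y = 0 <-> x = y) /\
  (forall x y, d x y = d y x) /\
  (forall x y z, d x y <= star (d x z) (d z y)).

Definition sm_open {X : Type} (d : X -> X -> R) (U : X -> Prop) : Prop :=
  forall a, U a -> exists r, 0 < r /\ forall x, d a x < r -> U x.

Definition sm_closed {X : Type} (d : X -> X -> R) (F : X -> Prop) : Prop :=
  sm_open d (fun x => ~ F x).

(* diameter in the extended reals: sup of distances, 0 for the empty set
   (0 is added to the set; harmless since distances are >= 0) *)
Definition diam {X : Type} (d : X -> X -> R) (A : X -> Prop) : Rbar :=
  Lub_Rbar (fun r => r = 0 \/ exists x y, A x /\ A y /\ r = d x y).

Definition cauchy_seq {X : Type} (d : X -> X -> R) (u : nat -> X) : Prop :=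
  forall eps, 0 < eps -> exists k, forall m n, (k <= m)%nat -> (k <= n)%nat ->
    d (u n) (u m) < eps.

Definition converges_to {X : Type} (d : X -> X -> R) (u : nat -> X) (x : X) : Prop :=
  forall eps, 0 < eps -> exists k, forall n, (k <= n)%nat -> d x (u n) < eps.

Definition sm_complete {X : Type} (d : X -> X -> R) : Prop :=
  forall u, cauchy_seq d u -> exists x, converges_to d u x.

Definition finite_intersection_property {X S : Type} (F : S -> X -> Prop) : Prop :=
  forall l : list S, exists x, forall s, List.In s l -> F s x.

(* Main.v *)
Require Import Defs.
From Stdlib Require Import Reals Lra Lia List Classical ClassicalEpsilon.
From Coquelicot Require Import Coquelicot.
Open Scope R_scope.

Section Aux.
Variable star : R -> R -> R.
Hypothesis Hstar : t_definer star.

Lemma star0l b : 0 <= b -> star 0 b = b.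
Proof.
  destruct Hstar as [H0 [Hc [_ [_ [Hid _]]]]]. intros Hb.
  rewrite Hc by lra. now apply Hid.
Qed.

Lemma star_mono_r a b c : 0 <= a -> 0 <= b -> b <= c -> star a b <= star a c.
Proof.
  destruct Hstar as [H0 [Hc [_ [Hm _]]]]. intros.
  rewrite (Hc a b), (Hc a c) by lra. apply Hm; lra.
Qed.

Lemma star_small b eps : 0 <= b -> 0 < eps ->
  exists delta, 0 < delta /\ forall a, 0 <= a -> a < delta -> star a b < b + eps.
Proof.
  destruct Hstar as [_ [_ [_ [_ [_ Hcont]]]]]. intros Hb He.
  destruct (Hcont b 0 Hb (Rle_refl 0) eps He) as [dl [Hdl H]].
  exists dl; split; auto. intros a Ha Hlt.
  specialize (H a Ha). rewrite star0l in H by auto.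
  assert (H1 : Rabs (a - 0) < dl) by (rewrite Rminus_0_r, Rabs_pos_eq; lra).
  specialize (H H1). apply Rabs_def2 in H. lra.
Qed.
End Aux.

Lemma diam_le {X : Type} (d : X -> X -> R) (A : X -> Prop) (M : R) :
  0 <= M -> (forall x y, A x -> A y -> d x y <= M) -> Rbar_le (diam d A) M.
Proof.
  intros HM H. unfold diam. destruct (Lub_Rbar_correct (fun r => r = 0 \/ exists x y, A x /\ A y /\ r = d x y)) as [_ Hl].
  apply Hl. intros r [-> | [x [y [Hx [Hy ->]]]]]; simpl; auto.
Qed.

Lemma diam_bound {X : Type} (d : X -> X -> R) (A : X -> Prop) (eps : R) x y :
  Rbar_lt (diam d A) eps -> A x -> A y -> d x y < eps.
Proof.
  intros H Hx Hy. unfold diam in H.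
  destruct (Lub_Rbar_correct (fun r => r = 0 \/ exists x y, A x /\ A y /\ r = d x y)) as [Hu _].
  assert (Hle : Rbar_le (d x y) (Lub_Rbar (fun r => r = 0 \/ exists x y, A x /\ A y /\ r = d x y))).
  { apply Hu. right. exists x, y. auto. }
  exact (Rbar_le_lt_trans _ _ (Finite eps) Hle H).
Qed.

Lemma small_inv eps : 0 < eps -> exists k, / INR (S k) < eps.
Proof.
  intros He. destruct (archimed_cor1 eps He) as [N [HN HN0]].
  exists N. eapply Rle_lt_trans; [|exact HN].
  apply Rinv_le_contravar. apply lt_0_INR; lia. rewrite S_INR; lra.
Qed.

Theorem theorem4p10 (X : Type) (x0 : X) (star : R -> R -> R) (d : X -> X -> R)
  (Hstar : t_definer star) (Hd : star_metric star d) :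
  sm_complete d <->
  (forall (S : Type) (F : S -> X -> Prop),
     (forall s, sm_closed d (F s)) ->
     finite_intersection_property F ->
     (forall eps, 0 < eps -> exists s, Rbar_lt (diam d (F s)) (Finite eps)) ->
     exists x, forall s, F s x).
Proof.
  destruct Hd as [Dpos [Deq [Dsym Dtri]]].
  split.
  - intros Hcomp S F Hcl Hfip Hdiam.
    assert (Hs : forall n : nat, {s | Rbar_lt (diam d (F s)) (Finite (/ INR (Datatypes.S n)))}).
    { intro n. apply constructive_indefinite_description. apply Hdiam.
      apply Rinv_0_lt_compat, lt_0_INR; lia. }
    set (sf := fun n => proj1_sig (Hs n)).
    assert (Hsf : forall n, Rbar_lt (diam d (F (sf n))) (Finite (/ INR (Datatypes.S n)))).
    { intro n. exact (proj2_sig (Hs n)). }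
    assert (Hx : forall n : nat, {x | forall s, In s (map sf (seq 0 (Datatypes.S n))) -> F s x}).
    { intro n. apply constructive_indefinite_description. apply Hfip. }
    set (xs := fun n => proj1_sig (Hx n)).
    assert (Hxs : forall k n, (k <= n)%nat -> F (sf k) (xs n)).
    { intros k n Hkn. apply (proj2_sig (Hx n)). apply in_map. apply in_seq. lia. }
    destruct (Hcomp xs) as [x Hconv].
    { intros eps He. destruct (small_inv eps He) as [k Hk]. exists k.
      intros m n Hm Hn. eapply Rlt_trans; [|exact Hk].
      eapply diam_bound; [apply Hsf | apply Hxs; auto | apply Hxs; auto]. }
    exists x. intros s. apply NNPP. intros Hnot.
    destruct (Hcl s x Hnot) as [r [Hr Hball]].
    destruct (star_small star Hstar (r/2) (r/2)) as [dl [Hdl Hsm]]; try lra.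
    destruct (small_inv (r/2)) as [k Hk]; try lra.
    destruct (Hconv dl Hdl) as [K HK].
    set (n := max k K).
    destruct (Hfip (s :: sf k :: nil)) as [y Hy].
    assert (Fsy : F s y) by (apply Hy; simpl; auto).
    assert (Fky : F (sf k) y) by (apply Hy; simpl; auto).
    assert (H1 : d (xs n) y < r/2).
    { eapply Rlt_trans; [|exact Hk]. eapply diam_bound; [apply Hsf| apply Hxs; unfold n; lia | exact Fky]. }
    assert (H2 : d x (xs n) < dl) by (apply HK; unfold n; lia).
    apply (Hball y); [|exact Fsy].
    eapply Rle_lt_trans; [apply (Dtri x y (xs n))|].
    eapply Rle_lt_trans; [apply star_mono_r; [exact Hstar|apply Dpos|apply Dpos|left; exact H1]|].
    specialize (Hsm (d x (xs n)) (Dpos _ _) H2). lra.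
  - intros Hcant u Hcau.
    set (good := fun (p : R * nat) => 0 < fst p /\ forall m n, (snd p <= m)%nat -> (snd p <= n)%nat -> d (u n) (u m) < fst p).
    set (F := fun (p : R * nat) (x : X) => good p -> forall m, (snd p <= m)%nat -> d x (u m) <= fst p).
    assert (Hgood : forall eps, 0 < eps -> exists p, good p /\ fst p < eps /\ Rbar_lt (diam d (F p)) (Finite eps)).
    { intros eps He.
      destruct (star_small star Hstar (eps/2) (eps/2)) as [dl [Hdl Hsm]]; try lra.
      set (e := Rmin (dl/2) (eps/2)).
      assert (He0 : 0 < e) by (unfold e; apply Rmin_glb_lt; lra).
      assert (He1 : e <= dl/2) by apply Rmin_l.
      assert (He2 : e <= eps/2) by apply Rmin_r.
      destruct (Hcau e He0) as [N HN].
      assert (Hg : good (e, N)) by (split; simpl; auto).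
      exists (e, N). split; [exact Hg|]. split; [simpl; lra|].
      apply Rbar_le_lt_trans with (Finite (star e e)).
      + apply diam_le.
        { pose proof Hstar as [H0 _]. apply H0; lra. }
        intros x y Hx Hy.
        specialize (Hx Hg N (le_n _)). specialize (Hy Hg N (le_n _)). simpl in Hx, Hy.
        eapply Rle_trans; [apply (Dtri x y (u N))|].
        rewrite (Dsym (u N) y).
        pose proof Hstar as [_ [_ [_ [Hm _]]]].
        eapply Rle_trans; [apply (Hm (d x (u N)) e (d y (u N))); [apply Dpos|lra|apply Dpos|exact Hx]|].
        apply star_mono_r; auto; lra.
      + simpl. eapply Rle_lt_trans; [apply star_mono_r with (c := eps/2); auto; lra|].
        specialize (Hsm e ltac:(lra) ltac:(lra)). lra. }
    destruct (Hcant (R * nat)%type F) as [x Hx].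
    + intros p x Hnx. unfold F in Hnx.
      apply imply_to_and in Hnx. destruct Hnx as [Hg Hnx].
      apply not_all_ex_not in Hnx. destruct Hnx as [m Hm].
      apply imply_to_and in Hm. destruct Hm as [Hm Hlt]. apply Rnot_le_lt in Hlt.
      pose proof (proj1 Hg) as Hp.
      destruct (star_small star Hstar (fst p) (d x (u m) - fst p)) as [dl [Hdl Hsm]]; try lra.
      exists dl. split; auto. intros y Hy HFy.
      specialize (HFy Hg m Hm).
      assert (H1 : d x (u m) <= star (d x y) (d y (u m))) by apply Dtri.
      assert (H2 : star (d x y) (d y (u m)) <= star (d x y) (fst p))
        by (apply star_mono_r; auto).
      specialize (Hsm (d x y) (Dpos _ _) Hy). lra.
    + intros l.
      assert (Hl : exists M, forall p, In p l -> (snd p <= M)%nat).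
      { induction l as [|a l IH]. exists 0%nat; simpl; tauto.
        destruct IH as [M HM]. exists (max (snd a) M). intros p [<-|Hin]. lia.
        specialize (HM p Hin). lia. }
      destruct Hl as [M HM]. exists (u M). intros p Hin Hg m Hm.
      left. apply (proj2 Hg); auto.
    + intros eps He. destruct (Hgood eps He) as [p [_ [_ Hp]]]. eauto.
    + exists x. intros eps He. destruct (Hgood eps He) as [p [Hg [Hpe _]]].
      exists (snd p). intros n Hn. specialize (Hx p Hg n Hn). lra.
Qed.
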